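(* Let $G$ be a finite $p$-group. Then for every $k\geq 1$, $[\lambda_k(G),G^\varphi]=[G,(\lambda_k(G))^\varphi]$ in $\nu(G)$.
   Context: Conventions: ${}^gh=ghg^{-1}$ and $[g,h]=ghg^{-1}h^{-1}$. For a group $G$ let $G^\varphi$ be an isomorphic copy of $G$ via $\varphi:G\to G^\varphi$. The group $\nu(G)$ is the quotient of the free product $G\ast G^\varphi$ by the normal subgroup generated by all words ${}^{g_3}[g_1,g_2^\varphi]\cdot[{}^{g_3}g_1,({}^{g_3}g_2)^\varphi]^{-1}$ and ${}^{g_3^\varphi}[g_1,g_2^\varphi]\cdot[{}^{g_3}g_1,({}^{g_3}g_2)^\varphi]^{-1}$, $g_1,g_2,g_3\in G$. For subgroups $A,B\le G$, $[A,B^\varphi]$ is the subgroup of $\nu(G)$ generated by all $[a,b^\varphi]$, $a\in A$, $b\in B$. The lower central $p$-series is $\lambda_1(G)=G$, $\lambda_{k+1}(G)=[\lambda_k(G),G]\lambda_k(G)^p$. *)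

(* Defs.v *)
From mathcomp Require Import all_boot all_fingroup all_solvable.
Set Implicit Arguments. Unset Strict Implicit. Unset Printing Implicit Defensive.
Local Open Scope group_scope.

Section Nu.
Variable gT : finGroupType.

(* Lower central p-series, indexed as in the paper: lambda_1 = G,
   lambda_{k+1} = [lambda_k, G] lambda_k^p  (here G = [set: gT]).
   lambda_ p 0 is a junk value (= G). *)
Definition lambda_step (p : nat) (L : {set gT}) : {set gT} :=
  <<[~: L, [set: gT]] :|: [set x ^+ p | x in L]>>.
Definition lambda_ (p k : nat) : {set gT} := iter k.-1 (lambda_step p) [set: gT].

(* nu(G) as a presented group: words over the letters of G * G^phi.
   A letter (c, g, i) is the generator g of copy c (false = G, true = G^phi),
   inverted iff i. *)
Definition letter := (bool * gT * bool)%type.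
Definition word := seq letter.
Definition linv (l : letter) : letter := (l.1.1, l.1.2, ~~ l.2).
Definition winv (w : word) : word := rev (map linv w).
Definition emb (c : bool) (g : gT) : word := [:: (c, g, false)].
Definition wconj (y x : word) : word := y ++ x ++ winv y.
Definition wcomm (x y : word) : word := x ++ y ++ winv x ++ winv y.
(* paper's conjugation in G: ^h g = h g h^-1 *)
Definition gconj (h g : gT) : gT := h * g * h^-1.

Definition nu_relator (r : word) : Prop :=
  exists (c : bool) (g1 g2 g3 : gT),
    r = wconj (emb c g3) (wcomm (emb false g1) (emb true g2))
        ++ winv (wcomm (emb false (gconj g3 g1)) (emb true (gconj g3 g2))).

(* equality in nu(G): the congruence generated by free reduction, the
   multiplication tables of G and G^phi (free product) and the nu relators *)
Inductive nueq : word -> word -> Prop :=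
| nueq_refl w : nueq w w
| nueq_sym u v : nueq u v -> nueq v u
| nueq_trans u v w : nueq u v -> nueq v w -> nueq u w
| nueq_ctx a b u v : nueq u v -> nueq (a ++ u ++ b) (a ++ v ++ b)
| nueq_free l : nueq [:: l; linv l] [::]
| nueq_mul c g h : nueq [:: (c, g, false); (c, h, false)] [:: (c, g * h, false)]
| nueq_rel r : nu_relator r -> nueq r [::].

Inductive gen_words (S : word -> Prop) : word -> Prop :=
| gen_nil : gen_words S [::]
| gen_cons s v : S s -> gen_words S v -> gen_words S (s ++ v)
| gen_invcons s v : S s -> gen_words S v -> gen_words S (winv s ++ v).

Definition in_nusub (S : word -> Prop) (w : word) : Prop :=
  exists2 v, gen_words S v & nueq w v.

Definition comm_gens (A B : {set gT}) (w : word) : Prop :=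
  exists a b, [/\ a \in A, b \in B & w = wcomm (emb false a) (emb true b)].

End Nu.

(* Main.v *)
Require Import Defs.
From mathcomp Require Import all_boot all_fingroup all_solvable.
From Stdlib Require Import Setoid Morphisms.
Set Implicit Arguments. Unset Strict Implicit. Unset Printing Implicit Defensive.
Local Open Scope group_scope.

Section W.
Variable gT : finGroupType.
Local Notation word := (seq (letter gT)).
Local Notation "u =w v" := (@nueq gT u v) (at level 70).

Global Instance nueq_Equiv : Equivalence (@nueq gT).
Proof. split; [exact: nueq_refl| exact: nueq_sym| exact: nueq_trans]. Qed.

Global Instance cat_Proper : Proper (@nueq gT ==> @nueq gT ==> @nueq gT) (@cat _).
Proof.
move=> u u' Hu v v' Hv.
transitivity (u' ++ v).
  by have := nueq_ctx [::] v Hu.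
by have := nueq_ctx u' [::] Hv; rewrite !cats0.
Qed.

Lemma winv_cat (u v : word) : winv (u ++ v) = winv v ++ winv u.
Proof. by rewrite /winv map_cat rev_cat. Qed.

Lemma linvK : involutive (@linv gT).
Proof. by case=> [[c g] i]; rewrite /linv /= negbK. Qed.

Lemma winvK (u : word) : winv (winv u) = u.
Proof. by rewrite /winv map_rev revK -map_comp (eq_map linvK) map_id. Qed.

Lemma catV (u : word) : u ++ winv u =w [::].
Proof.
elim: u => [|l u IH]; first by reflexivity.
have -> : (l :: u) ++ winv (l :: u) = [:: l] ++ (u ++ winv u) ++ [:: linv l].
  by rewrite -cat1s winv_cat /= -!catA.
rewrite IH /=. exact: nueq_free.
Qed.

Lemma catVl (u : word) : winv u ++ u =w [::].
Proof. by have := catV (winv u); rewrite winvK. Qed.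

Global Instance winv_Proper : Proper (@nueq gT ==> @nueq gT) (@winv gT).
Proof.
move=> u v H.
transitivity (winv u ++ v ++ winv v); first by rewrite catV cats0; reflexivity.
transitivity (winv u ++ u ++ winv v).
  apply: cat_Proper; first reflexivity. apply: cat_Proper; [symmetry; exact: H|reflexivity].
by rewrite catA catVl; reflexivity.
Qed.

Hint Resolve nueq_refl : core.

Lemma catKV (u v : word) : winv u ++ (u ++ v) =w v.
Proof. by rewrite catA catVl. Qed.
Lemma catVK (u v : word) : u ++ (winv u ++ v) =w v.
Proof. by rewrite catA catV. Qed.

Lemma eq_catV (u v : word) : u ++ winv v =w [::] -> u =w v.
Proof.
move=> H. transitivity (u ++ winv v ++ v); first by rewrite catVl cats0.
by rewrite catA H.
Qed.

Lemma emb_mul c (g h : gT) : emb c g ++ emb c h =w emb c (g * h).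
Proof. exact: nueq_mul. Qed.

Lemma emb1 c : emb c (1 : gT) =w [::].
Proof.
transitivity (emb c 1 ++ emb c 1 ++ winv (emb c (1 : gT))); first by rewrite catV cats0.
by rewrite catA emb_mul mul1g catV.
Qed.

Lemma emb_inv c (g : gT) : winv (emb c g) =w emb c g^-1.
Proof.
transitivity (winv (emb c g) ++ emb c g ++ emb c g^-1); last by rewrite catKV.
by rewrite emb_mul mulgV emb1 cats0.
Qed.

Definition lval (l : letter gT) : gT := if l.2 then l.1.2^-1 else l.1.2.

Lemma letter_emb (l : letter gT) : [:: l] =w emb l.1.1 (lval l).
Proof.
case: l => [[c g] [|]]; rewrite /lval /=; last by [].
by rewrite -emb_inv.
Qed.

Global Instance wconj_Proper : Proper (@nueq gT ==> @nueq gT ==> @nueq gT) (@wconj gT).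
Proof. by move=> y y' Hy u u' Hu; rewrite /wconj Hy Hu. Qed.

Lemma wconj_cat (y u v : word) : wconj y (u ++ v) =w wconj y u ++ wconj y v.
Proof. by rewrite /wconj -!catA catKV. Qed.

Lemma wconj_winv (y u : word) : wconj y (winv u) = winv (wconj y u).
Proof. by rewrite /wconj !winv_cat winvK catA. Qed.

Lemma wconjM (y z u : word) : wconj (y ++ z) u = wconj y (wconj z u).
Proof. by rewrite /wconj winv_cat -!catA. Qed.

Lemma wconj_nil (y : word) : wconj y [::] =w [::].
Proof. by rewrite /wconj /= catV. Qed.

Local Notation t a b := (wcomm (emb false a) (emb true b)).

Lemma rel c (g a b : gT) : wconj (emb c g) (t a b) =w t (gconj g a) (gconj g b).
Proof. apply: eq_catV; apply: nueq_rel; by exists c, a, b, g. Qed.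

Lemma gconjM (g h x : gT) : gconj g (gconj h x) = gconj (g * h) x.
Proof. by rewrite /gconj invMg !mulgA. Qed.

Lemma gconj1 (x : gT) : gconj 1 x = x.
Proof. by rewrite /gconj invg1 mulg1 mul1g. Qed.

Lemma conj_letter (l : letter gT) (a b : gT) :
  wconj [:: l] (t a b) =w t (gconj (lval l) a) (gconj (lval l) b).
Proof. by rewrite letter_emb rel. Qed.

Lemma conjPG (g a b : gT) : wconj (emb true g) (t a b) =w wconj (emb false g) (t a b).
Proof. by rewrite !rel. Qed.

Lemma t1 (c : gT) : t 1 c =w [::].
Proof. by rewrite /wcomm emb_inv invg1 emb1 !cat0s catV. Qed.

Lemma F1 (a b c : gT) : t (a * b) c =w wconj (emb false a) (t b c) ++ t a c.
Proof.
rewrite /wcomm /wconj -emb_mul !winv_cat -!catA.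
by rewrite catKV catKV.
Qed.

Lemma F2 (a b c : gT) : t a (b * c) =w t a b ++ wconj (emb true b) (t a c).
Proof.
rewrite /wcomm /wconj -emb_mul !winv_cat -!catA.
by rewrite catKV catKV.
Qed.

Lemma gen_cat (S : word -> Prop) u v :
  gen_words S u -> gen_words S v -> gen_words S (u ++ v).
Proof.
move=> Hu Hv; elim: Hu => [|s w Ss _ IH|s w Ss _ IH] //.
  by rewrite -catA; apply: gen_cons.
by rewrite -catA; apply: gen_invcons.
Qed.

Lemma gen_one (S : word -> Prop) s : S s -> gen_words S s.
Proof. by move=> Ss; rewrite -[s]cats0; apply: gen_cons => //; apply: gen_nil. Qed.

Lemma gen_winv (S : word -> Prop) u : gen_words S u -> gen_words S (winv u).
Proof.
elim=> [|s w Ss _ IH|s w Ss _ IH]; first exact: gen_nil.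
  rewrite winv_cat; apply: gen_cat => //.
  by rewrite -[winv s]cats0; apply: gen_invcons => //; apply: gen_nil.
rewrite winv_cat winvK; apply: gen_cat => //; exact: gen_one.
Qed.

Global Instance in_nusub_Proper (S : word -> Prop) :
  Proper (@nueq gT ==> iff) (in_nusub S).
Proof.
move=> u v H; split=> [[w Hw Hu]|[w Hw Hv]]; exists w => //.
  by rewrite -H.
by rewrite H.
Qed.

Lemma ns_nil (S : word -> Prop) : in_nusub S [::].
Proof. by exists [::] => //; apply: gen_nil. Qed.

Lemma ns_gen (S : word -> Prop) s : S s -> in_nusub S s.
Proof. by move=> Ss; exists s => //; apply: gen_one. Qed.

Lemma ns_cat (S : word -> Prop) u v : in_nusub S u -> in_nusub S v -> in_nusub S (u ++ v).
Proof.
move=> [u' Hu' Eu] [v' Hv' Ev]; exists (u' ++ v'); first exact: gen_cat.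
by rewrite Eu Ev.
Qed.

Lemma ns_winv (S : word -> Prop) u : in_nusub S u -> in_nusub S (winv u).
Proof. by move=> [u' Hu' Eu]; exists (winv u'); [exact: gen_winv| rewrite Eu]. Qed.

Lemma ns_mono (S S' : word -> Prop) : (forall s, S s -> S' s) ->
  forall u, in_nusub S u -> in_nusub S' u.
Proof.
move=> SS u [v Hv Ev]; exists v => //; elim: Hv {Ev} => [|s w Ss _ IH|s w Ss _ IH].
- exact: gen_nil.
- by apply: gen_cons => //; apply: SS.
- by apply: gen_invcons => //; apply: SS.
Qed.

Lemma conj_ext (y1 y2 : word) (S : word -> Prop) :
  (forall s, S s -> wconj y1 s =w wconj y2 s) ->
  forall w, in_nusub S w -> wconj y1 w =w wconj y2 w.
Proof.
move=> H w [v Hv ->]; elim: Hv => [|s w' Ss _ IH|s w' Ss _ IH].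
- by rewrite !wconj_nil.
- by rewrite !wconj_cat H // IH.
- by rewrite !wconj_cat !wconj_winv H // IH.
Qed.

Lemma nconj (S : word -> Prop) :
  (forall l s, S s -> in_nusub S (wconj [:: l] s)) ->
  forall y w, in_nusub S w -> in_nusub S (wconj y w).
Proof.
move=> H; elim=> [|l y IHy] w Hw.
  by rewrite /wconj /= cats0.
rewrite -cat1s wconjM.
have {Hw} := IHy w Hw; move: (wconj y w) => w1 [v Hv ->].
elim: Hv => [|s w' Ss _ IH|s w' Ss _ IH].
- rewrite wconj_nil; exact: ns_nil.
- by rewrite wconj_cat; apply: ns_cat => //; apply: H.
- by rewrite wconj_cat wconj_winv; apply: ns_cat => //; apply: ns_winv; apply: H.
Qed.

Definition isT (s : word) := exists x y, s = t x y.
Definition TW := in_nusub isT.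

Lemma comm_isT (A B : {set gT}) s : comm_gens A B s -> isT s.
Proof. by case=> a [b [_ _ ->]]; exists a, b. Qed.

Lemma TW_comm (A B : {set gT}) w : in_nusub (comm_gens A B) w -> TW w.
Proof. exact/ns_mono/comm_isT. Qed.

Lemma TW_t (a b : gT) : TW (t a b).
Proof. by apply: ns_gen; exists a, b. Qed.

Lemma TW_conj y w : TW w -> TW (wconj y w).
Proof.
apply: nconj => l s [x [z ->]]; rewrite conj_letter; exact: TW_t.
Qed.

Lemma comm_normal (A B : {set gT}) :
  (forall g a, a \in A -> gconj g a \in A) -> (forall g b, b \in B -> gconj g b \in B) ->
  forall y w, in_nusub (comm_gens A B) w -> in_nusub (comm_gens A B) (wconj y w).
Proof.
move=> HA HB; apply: nconj => l s [a [b [Ha Hb ->]]].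
rewrite conj_letter; apply: ns_gen; exists (gconj (lval l) a), (gconj (lval l) b).
by split => //; [apply: HA | apply: HB].
Qed.

Lemma conjPG_TW g w : TW w -> wconj (emb true g) w =w wconj (emb false g) w.
Proof. by apply: conj_ext => s [x [y ->]]; apply: conjPG. Qed.

Definition cm (a b : gT) := a * b * a^-1 * b^-1.

Lemma conj_t_TW (a b : gT) w : TW w -> wconj (t a b) w =w wconj (emb false (cm a b)) w.
Proof.
apply: conj_ext => s [x [y ->]].
have -> : t a b =w emb false a ++ emb true b ++ emb false a^-1 ++ emb true b^-1.
  by rewrite /wcomm !emb_inv.
by rewrite !wconjM !rel !gconjM /cm ?mulgA.
Qed.

Lemma t1r (a : gT) : t a 1 =w [::].
Proof. by rewrite /wcomm (emb_inv true 1) invg1 emb1 cat0s cats0 catV. Qed.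

Lemma conj_move (y u v : word) : wconj y u =w v -> u =w wconj (winv y) v.
Proof. by move=> <-; rewrite -wconjM /wconj winv_cat winvK -!catA catKV catVl cats0. Qed.

Lemma F1V (a c : gT) : t a^-1 c =w wconj (emb false a^-1) (winv (t a c)).
Proof.
have H := F1 a^-1 a c; rewrite mulVg t1 in H.
rewrite wconj_winv.
transitivity (winv (wconj (emb false a^-1) (t a c)) ++ (wconj (emb false a^-1) (t a c) ++ t a^-1 c)).
  by rewrite catKV.
by rewrite -H cats0.
Qed.

Lemma F2V (a b : gT) : t a b^-1 =w wconj (emb true b^-1) (winv (t a b)).
Proof.
have H := F2 a b b^-1; rewrite mulgV t1r in H.
have H2 : wconj (emb true b) (t a b^-1) =w winv (t a b).
  transitivity (winv (t a b) ++ (t a b ++ wconj (emb true b) (t a b^-1))).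
    by rewrite catKV.
  by rewrite -H cats0.
by rewrite (conj_move H2) emb_inv.
Qed.


Lemma wconj0 (u : word) : wconj [::] u = u.
Proof. by rewrite /wconj /= cats0. Qed.

Ltac tw := repeat first [apply: TW_t | apply: TW_conj | apply: ns_cat | apply: ns_winv].

Lemma K1 (a b k : gT) : t (cm a b) k =w t a b ++ winv (wconj (emb false k) (t a b)).
Proof.
have E1 : cm a b = a * gconj b a^-1 by rewrite /cm /gconj !mulgA.
rewrite E1 F1.
have H3 : t (gconj b a^-1) k =w wconj (emb false b) (t a^-1 (gconj b^-1 k)).
  by rewrite rel gconjM mulgV gconj1.
rewrite H3 F1V.
have H4 : t a (gconj b^-1 k) =w wconj (emb true b^-1) (winv (t a b)) ++
          wconj (emb true b^-1) (t a k ++ wconj (emb true k) (t a b)).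
  have -> : gconj b^-1 k = b^-1 * (k * b) by rewrite /gconj invgK mulgA.
  by rewrite F2 F2V F2.
rewrite H4 -wconj_cat conjPG conjPG_TW; last by tw.
rewrite -wconj_winv -!wconjM !emb_mul.
rewrite -/(cm a b).
rewrite -conj_t_TW; last by tw.
move: (wconj (emb false k) (t a b)) (t a b) (t a k) => W U V.
rewrite /wconj !winv_cat !winvK -!catA catVK catVl cats0.
reflexivity.
Qed.

Lemma K2 (k a b : gT) : t k (cm a b) =w wconj (emb false k) (t a b) ++ winv (t a b).
Proof.
have E1 : cm a b = gconj a b * b^-1 by rewrite /cm /gconj.
rewrite E1 F2 F2V -wconjM emb_mul -E1 conjPG_TW; last by tw.
rewrite -conj_t_TW; last by tw.
have H3 : t k (gconj a b) =w wconj (emb false k) (t a b) ++ (t k b ++ winv (t a b)).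
  have : t (gconj a (gconj a^-1 k)) (gconj a b) =w wconj (emb false a) (t (gconj a^-1 k) b).
    by rewrite rel.
  rewrite gconjM mulgV gconj1 => ->.
  have -> : gconj a^-1 k = a^-1 * (k * a) by rewrite /gconj invgK mulgA.
  rewrite F1 F1V -wconj_cat -wconjM emb_mul mulgV emb1 wconj0 F1 -catA.
  reflexivity.
rewrite H3.
move: (wconj (emb false k) (t a b)) (t a b) (t k b) => W U V.
rewrite /wconj -!catA catKV catVK.
reflexivity.
Qed.

Definition swl (l : letter gT) : letter gT := (~~ l.1.1, l.1.2, l.2).
Definition sw (u : word) : word := map swl u.

Lemma sw_cat u v : sw (u ++ v) = sw u ++ sw v.
Proof. exact: map_cat. Qed.

Lemma sw_winv u : sw (winv u) = winv (sw u).
Proof. by rewrite /sw /winv map_rev -!map_comp; congr rev; apply: eq_map => [[[c g] i]]. Qed.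

Lemma swK u : sw (sw u) = u.
Proof. by rewrite /sw -map_comp -[RHS]map_id; apply: eq_map => [[[c g] i]]; rewrite /swl /= negbK. Qed.

Lemma sw_t (a b : gT) : sw (t a b) = winv (t b a).
Proof. by []. Qed.

Lemma sw_wconj y u : sw (wconj y u) = wconj (sw y) (sw u).
Proof. by rewrite /wconj !sw_cat sw_winv. Qed.

Lemma sw_nueq u v : u =w v -> sw u =w sw v.
Proof.
elim=> {u v} [w|u v _ IH|u v w _ IH1 _ IH2|a b u v _ IH|l|c g h|r [c [g1 [g2 [g3 ->]]]]].
- by [].
- by rewrite IH.
- by rewrite IH1 IH2.
- by rewrite !sw_cat IH.
- by case: l => [[c g] i]; apply: nueq_free.
- exact: nueq_mul.
- rewrite sw_cat sw_winv sw_wconj !sw_t winvK.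
  by rewrite wconj_winv rel catVl.
Qed.

Lemma sw_ns (A B : {set gT}) w :
  in_nusub (comm_gens A B) w -> in_nusub (comm_gens B A) (sw w).
Proof.
move=> [v Hv Ew]; exists (sw v); last exact: sw_nueq.
elim: Hv {Ew} => [|s v' [a [b [Ha Hb ->]]] _ IH|s v' [a [b [Ha Hb ->]]] _ IH].
- exact: gen_nil.
- by rewrite sw_cat sw_t; apply: gen_invcons => //; exists b, a.
- by rewrite sw_cat sw_winv sw_t winvK; apply: gen_cons => //; exists b, a.
Qed.

Section Step.
Variables (N M : {set gT}) (p : nat).
Hypothesis hM : forall g m, m \in M -> gconj g m \in M.
Hypothesis hNX : forall x n, x \in N -> x ^+ n \in N.
Hypothesis hNV : forall x, x \in N -> x^-1 \in N.
Hypothesis hcm : forall a b, b \in N -> cm a b \in M.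
Hypothesis hpow : forall b, b \in N -> b ^+ p \in M.
Hypothesis IH : forall w, in_nusub (comm_gens N [set: gT]) w -> in_nusub (comm_gens [set: gT] N) w.

Local Notation JM := (in_nusub (comm_gens [set: gT] M)).
Local Notation JN := (in_nusub (comm_gens [set: gT] N)).

Lemma JM_conj y w : JM w -> JM (wconj y w).
Proof. by apply: comm_normal => // g a _; exact: in_setT. Qed.

Definition modr (u v : word) := JM (u ++ winv v).
Local Notation "u =m v" := (modr u v) (at level 70).

Global Instance modr_Equiv : Equivalence modr.
Proof.
split.
- by move=> u; rewrite /modr catV; exact: ns_nil.
- by move=> u v H; have := ns_winv H; rewrite winv_cat winvK.
- move=> u v w H1 H2; have := ns_cat H1 H2.
  by rewrite /modr -catA catKV.
Qed.

Global Instance modr_cat : Proper (modr ==> modr ==> modr) (@cat _).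
Proof.
move=> u u' Hu v v' Hv.
have := ns_cat Hu (JM_conj u' Hv).
by rewrite /modr /wconj !winv_cat -!catA catKV.
Qed.

Global Instance modr_winv : Proper (modr ==> modr) (@winv gT).
Proof.
move=> u v H; have := JM_conj (winv u) (ns_winv H).
by rewrite /modr /wconj !winv_cat !winvK -!catA catVl cats0.
Qed.

Global Instance nueq_modr : subrelation (@nueq gT) modr.
Proof. by move=> u v H; rewrite /modr H catV; exact: ns_nil. Qed.

Global Instance modr_nueq : Proper (@nueq gT ==> @nueq gT ==> iff) modr.
Proof.
move=> u u' Hu v v' Hv; split=> H.
- by transitivity u; [symmetry; apply: nueq_modr | transitivity v => //; apply: nueq_modr].
- by transitivity u'; [apply: nueq_modr | transitivity v' => //; apply: nueq_modr; symmetry].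
Qed.

Global Instance wconj_modr y : Proper (modr ==> modr) (wconj y).
Proof. by move=> u v H; rewrite /wconj H; reflexivity. Qed.

Lemma JM_modr w : JM w <-> w =m [::].
Proof. by rewrite /modr /= cats0. Qed.


Lemma JM_of u v : u =m v -> JM v -> JM u.
Proof.
move=> H Hv; have := ns_cat H Hv.
by rewrite -catA catVl cats0.
Qed.

Lemma JN_gen (a b : gT) : b \in N -> JN (t a b).
Proof. by move=> Hb; apply: ns_gen; exists a, b; split => //; exact: in_setT. Qed.

Lemma JM_gen (a b : gT) : b \in M -> JM (t a b).
Proof. by move=> Hb; apply: ns_gen; exists a, b; split => //; exact: in_setT. Qed.

Lemma IH_t (a b : gT) : a \in N -> JN (t a b).
Proof. by move=> Ha; apply: IH; apply: ns_gen; exists a, b; split => //; exact: in_setT. Qed.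

Lemma D1gen l (a b : gT) : b \in N -> wconj [:: l] (t a b) =m t a b.
Proof.
move=> Hb.
have E : wconj [:: l] (t a b) =w wconj (emb false (lval l)) (t a b).
  by rewrite letter_emb; case: l => [[[|] g] i] /=; rewrite ?conjPG.
rewrite E /modr -K2; exact: JM_gen (hcm _ Hb).
Qed.



Lemma D1l l z : JN z -> wconj [:: l] z =m z.
Proof.
move=> [v Hv ->].
elim: Hv => [|s w' [a [b [_ Hb ->]]] _ IHw|s w' [a [b [_ Hb ->]]] _ IHw].
- by rewrite wconj_nil; reflexivity.
- by rewrite wconj_cat IHw D1gen //; reflexivity.
- by rewrite wconj_cat wconj_winv IHw D1gen //; reflexivity.
Qed.

Lemma D1 y z : JN z -> wconj y z =m z.
Proof.
move=> Hz; elim: y => [|l y IHy]; first by rewrite wconj0; reflexivity.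
by rewrite -cat1s wconjM IHy D1l //; reflexivity.
Qed.

Lemma comm_JN z y : JN z -> y ++ z =m z ++ y.
Proof.
move=> Hz.
have E : y ++ z =w wconj y z ++ y by rewrite /wconj -!catA catVl cats0.
by rewrite E D1 //; reflexivity.
Qed.

Definition wpow (w : word) n := iter n (cat w) [::].

Lemma wpowS w n : wpow w n.+1 = w ++ wpow w n.
Proof. by []. Qed.

Lemma wpowSr w n : wpow w n.+1 = wpow w n ++ w.
Proof. elim: n => [|n IHn]; first by rewrite /= cats0. by rewrite -[wpow w n.+2]/(w ++ wpow w n.+1) {1}IHn catA. Qed.

Lemma wpow_JN z n : JN z -> JN (wpow z n).
Proof. by move=> Hz; elim: n => [|n IHn]; [exact: ns_nil | rewrite wpowS; exact: ns_cat]. Qed.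

Lemma wpow_winv u n : wpow (winv u) n = winv (wpow u n).
Proof. elim: n => [|n IHn]; first by []. by rewrite wpowS IHn wpowSr winv_cat. Qed.

Lemma wpow_nueq u v n : u =w v -> wpow u n =w wpow v n.
Proof. move=> H; elim: n => [|n IHn]; first by []. by rewrite !wpowS IHn H. Qed.

Lemma wpow_cat u v n : JN u -> JN v -> wpow (u ++ v) n =m wpow u n ++ wpow v n.
Proof.
move=> Hu Hv; elim: n => [|n IHn]; first by reflexivity.
rewrite wpowS IHn -!catA (catA v) (comm_JN v (wpow_JN n Hu)).
by rewrite -catA; reflexivity.
Qed.

Lemma E_gen (a b : gT) n : b \in N -> t a (b ^+ n) =m wpow (t a b) n.
Proof.
move=> Hb; elim: n => [|n IHn]; first by rewrite expg0 t1r; reflexivity.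
rewrite expgS F2 D1; last exact: JN_gen (hNX _ Hb).
by rewrite IHn; reflexivity.
Qed.

Lemma wpow_nil n : wpow [::] n = [::].
Proof. by elim: n => [|n IHn]; last rewrite wpowS IHn. Qed.

Lemma E z : JN z -> JM (wpow z p).
Proof.
move=> [v Hv Ez]; apply/JM_modr; rewrite (wpow_nueq p Ez).
elim: Hv {Ez} => [|s w' Hs Hw IHw|s w' Hs Hw IHw]; first by rewrite wpow_nil; reflexivity.
- have Jw : JN w' by exists w'.
  rewrite wpow_cat //; last exact: ns_gen.
  case: Hs => [a [b [_ Hb ->]]]; rewrite -E_gen // IHw cats0.
  by apply/JM_modr; exact: JM_gen (hpow Hb).
- have Jw : JN w' by exists w'.
  rewrite wpow_cat //; last exact/ns_winv/ns_gen.
  case: Hs => [a [b [_ Hb ->]]]; rewrite wpow_winv -E_gen // IHw cats0.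
  have : t a (b ^+ p) =m [::] by apply/JM_modr; exact: JM_gen (hpow Hb).
  by move=> ->; reflexivity.
Qed.


Lemma N2 (x h : gT) n : x \in N -> t (x ^+ n) h =m wpow (t x h) n.
Proof.
move=> Hx; elim: n => [|n IHn]; first by rewrite expg0 t1; reflexivity.
rewrite expgS F1 D1; last exact: IH_t (hNX _ Hx).
by rewrite IHn wpowSr; reflexivity.
Qed.

Definition Pt (y : gT) := forall h, JM (t y h).

Lemma Pt1 : Pt 1.
Proof. by move=> h; rewrite t1; exact: ns_nil. Qed.

Lemma PtM x y : Pt x -> Pt y -> Pt (x * y).
Proof. by move=> Hx Hy h; rewrite F1; apply: ns_cat => //; apply: JM_conj. Qed.

Lemma Pt_gen (A : {set gT}) : (forall a, a \in A -> Pt a) -> forall y, y \in <<A>> -> Pt y.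
Proof.
move=> HA y /gen_prodgP [n [c Hc ->]].
elim: n c Hc => [|n IHn] c Hc; first by rewrite big_ord0; exact: Pt1.
rewrite big_ord_recl; apply: PtM; first exact: HA.
by apply: IHn => i.
Qed.

Lemma Pt_comm x g : x \in N -> Pt [~ x, g].
Proof.
move=> Hx h.
have -> : [~ x, g] = cm x^-1 g^-1 by rewrite /cm !invgK /commg /conjg !mulgA.
rewrite K1; apply/JM_modr; rewrite D1; last exact: IH_t (hNV Hx).
rewrite catV; reflexivity.
Qed.

Lemma Pt_pow x : x \in N -> Pt (x ^+ p).
Proof.
move=> Hx h; apply: (JM_of (N2 h p Hx)); apply: E; exact: IH_t.
Qed.

Lemma step_main (w : word) :
  M \subset <<[~: N, [set: gT]] :|: [set x ^+ p | x in N]>> ->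
  in_nusub (comm_gens M [set: gT]) w -> JM w.
Proof.
move=> sM [v Hv ->].
have PM : forall m, m \in M -> Pt m.
  move=> m /(subsetP sM); apply: Pt_gen => a; case/setUP.
    apply: Pt_gen => c /imset2P [x g Hx _ ->]; exact: Pt_comm.
  by case/imsetP => x Hx ->; exact: Pt_pow.
elim: Hv => [|s w' [a [b [Ha _ ->]]] _ IHw|s w' [a [b [Ha _ ->]]] _ IHw].
- exact: ns_nil.
- by apply: ns_cat => //; apply: PM.
- by apply: ns_cat => //; apply/ns_winv/PM.
Qed.

End Step.
End W.

Lemma lambda_grp (gT : finGroupType) p k :
  exists H : {group gT}, lambda_ gT p k = H /\ [set: gT] \subset 'N(H).
Proof.
case: k => [|k]; first by exists [set: gT]%G; split => //; exact: normG.
rewrite /lambda_ /=; elim: k => [|k [H [EH nH]]].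
  by exists [set: gT]%G; split => //; exact: normG.
rewrite iterS EH /lambda_step.
exists (<<[~: gval H, [set: gT]] :|: [set x ^+ p | x in gval H]>>)%G; split => //.
apply: subset_trans (norm_gen _); apply: normsU.
  by apply: normsR => //; exact: (normG [set: gT]%G).
apply/subsetP => g _; rewrite inE; apply/subsetP => y; rewrite mem_conjg.
case/imsetP => x Hx Ey; apply/imsetP; exists (x ^ g).
  by rewrite memJ_norm // (subsetP nH) // in_setT.
by rewrite -conjXg -Ey conjgKV.
Qed.

Lemma dir (gT : finGroupType) p k : 1 <= k -> forall w : word gT,
  in_nusub (comm_gens (lambda_ gT p k) [set: gT]) w ->
  in_nusub (comm_gens [set: gT] (lambda_ gT p k)) w.
Proof.
case: k => // n _; elim: n => [|n IHn] w; first by [].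
have [H1 [E1 n1]] := lambda_grp gT p n.+1.
have [H2 [E2 n2]] := lambda_grp gT p n.+2.
have EM : lambda_ gT p n.+2 = lambda_step p (lambda_ gT p n.+1) by [].
have sub1 : [~: lambda_ gT p n.+1, [set: gT]] \subset lambda_ gT p n.+2.
  by rewrite EM /lambda_step; apply: subset_trans (subset_gen _); exact: subsetUl.
apply: (step_main (N := lambda_ gT p n.+1)) => //.
- move=> g m; rewrite E2 => Hm.
  have -> : gconj g m = m ^ g^-1 by rewrite /gconj /conjg invgK !mulgA.
  by rewrite memJ_norm // (subsetP n2) // in_setT.
- by move=> x m; rewrite E1; exact: groupX.
- by move=> x; rewrite E1 groupV.
- move=> a b Hb; apply: (subsetP sub1).
  have -> : cm a b = [~ a^-1, b^-1] by rewrite /cm /commg /conjg !invgK !mulgA.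
  by rewrite commGC; apply: mem_commg => //; rewrite E1 groupV -E1.
- move=> b Hb; rewrite EM /lambda_step; apply: mem_gen; apply/setUP; right.
  by apply/imsetP; exists b.
- by rewrite EM.
Qed.

Theorem lemma4p1 (gT : finGroupType) (p : nat) :
  prime p -> (p.-group [set: gT])%g ->
  forall k : nat, 1 <= k ->
  forall w : word gT,
    in_nusub (comm_gens (@lambda_ gT p k) [set: gT]) w <->
    in_nusub (comm_gens [set: gT] (@lambda_ gT p k)) w.
Proof.
move=> _ _ k hk w; split; first exact: dir.
move=> Hw; rewrite -(swK w); apply: sw_ns; apply: dir => //; exact: sw_ns.
Qed.
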